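(* The first-order theory $T_{\mathrm{as\text{-}irr}}$ is $\aleph_0$-categorical, has no finite models, and is therefore complete.
   Context: $T_{\mathrm{as\text{-}irr}}$ is the first-order theory in the language with one binary relation $<$ consisting of: $\forall x\,\neg(x<x)$; $\forall x,y,z((x<y\wedge y<z)\rightarrow x<z)$; (Depth-at-least-3) $\exists x_0,x_1,x_2(x_0<x_1\wedge x_1<x_2)$; (Depth-at-most-3) $\neg\exists x_0,x_1,x_2,x_3(x_0<x_1\wedge x_1<x_2\wedge x_2<x_3)$; and the following extension axioms, where $L_1$ is the (first-order definable) set of minimal elements, $L_2$ the set of elements immediately succeeding (covering) an element of $L_1$, and $L_3$ the set of elements immediately succeeding an element of $L_2$: (a) for all $j,k,l\ge0$: for all distinct $x_0,\dots,x_{k-1},y_0,\dots,y_{j-1}\in L_2$ and distinct $z_0,\dots,z_{l-1}\in L_1$ there is $z\in L_1$ different from all $z_i$ with $\bigwedge_{i<k}z<x_i\wedge\bigwedge_{i<j}\neg(z<y_i)$; (b) for all $j,k,l\ge0$: for all distinct $x_0,\dots,x_{k-1},y_0,\dots,y_{j-1}\in L_2$ and distinct $z_0,\dots,z_{l-1}\in L_3$ there is $z\in L_3$ different from all $z_i$ with $\bigwedge_{i<k}x_i<z\wedge\bigwedge_{i<j}\neg(y_i<z)$; (c) for all $j,j',k,k',l\ge0$: for all distinct $x_0,\dots,x_{k-1},y_0,\dots,y_{j-1}\in L_1$, distinct $x'_0,\dots,x'_{k'-1},y'_0,\dots,y'_{j'-1}\in L_3$ and distinct $z_0,\dots,z_{l-1}\in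 L_2$ there is $z\in L_2$ different from all $z_i$ with $\bigwedge_{i<k}x_i<z\wedge\bigwedge_{i<j}\neg(y_i<z)\wedge\bigwedge_{i<k'}z<x'_i\wedge\bigwedge_{i<j'}\neg(z<y'_i)$. *)

(* Defs.v *)
From mathcomp Require Import all_boot.
Set Implicit Arguments. Unset Strict Implicit. Unset Printing Implicit Defensive.

Inductive form : Type :=
  | FLt  : nat -> nat -> form
  | FEq  : nat -> nat -> form
  | FBot : form
  | FImp : form -> form -> form
  | FAll : nat -> form -> form.

Definition FNot p := FImp p FBot.
Definition FTop := FNot FBot.
Definition FAnd p q := FNot (FImp p (FNot q)).
Definition FOr p q := FImp (FNot p) q.
Definition FEx i p := FNot (FAll i (FNot p)).

Fixpoint fv (p : form) : seq nat :=
  match p with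
  | FLt i j | FEq i j => [:: i; j]
  | FBot => [::]
  | FImp p q => fv p ++ fv q
  | FAll i p => filter (fun k => k != i) (fv p)
  end.
Definition sentence (p : form) : Prop := fv p = [::].

Definition upd (M : Type) (v : nat -> M) (i : nat) (a : M) : nat -> M :=
  fun k => if k == i then a else v k.

Fixpoint sat (M : Type) (R : M -> M -> Prop) (v : nat -> M) (p : form) : Prop :=
  match p with
  | FLt i j => R (v i) (v j)
  | FEq i j => v i = v j
  | FBot => False
  | FImp p q => sat R v p -> sat R v q
  | FAll i p => forall a : M, sat R (upd v i a) p
  end.

Definition bigAnd (ps : seq form) : form := foldr FAnd FTop ps.
Definition bigAll (xs : seq nat) (p : form) : form := foldr FAll p xs.
Fixpoint distinctF (xs : seq nat) : form :=
  match xs with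
  | [::] => FTop
  | x :: xs' => FAnd (bigAnd [seq FNot (FEq x y) | y <- xs']) (distinctF xs')
  end.

(** * The definable levels L1, L2, L3 (one free variable x; the auxiliary
    bound variables x+1, x+2, x+3 occur only inside these formulas). *)
Definition L1 (x : nat) : form := FAll x.+1 (FNot (FLt x.+1 x)).
Definition covers (y x z : nat) : form :=
  FAnd (FLt y x) (FNot (FEx z (FAnd (FLt y z) (FLt z x)))).
Definition L2 (x : nat) : form :=
  FEx x.+1 (FAnd (L1 x.+1) (covers x.+1 x x.+2)).
Definition L3 (x : nat) : form :=
  FEx x.+1 (FAnd (L2 x.+1) (covers x.+1 x x.+2)).

Definition ax_irrefl : form := FAll 0 (FNot (FLt 0 0)).
Definition ax_trans : form :=
  FAll 0 (FAll 1 (FAll 2 (FImp (FAnd (FLt 0 1) (FLt 1 2)) (FLt 0 2)))).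
Definition ax_depth_ge3 : form :=
  FEx 0 (FEx 1 (FEx 2 (FAnd (FLt 0 1) (FLt 1 2)))).
Definition ax_depth_le3 : form :=
  FNot (FEx 0 (FEx 1 (FEx 2 (FEx 3
     (bigAnd [:: FLt 0 1; FLt 1 2; FLt 2 3]))))).

Definition ax_a (j k l : nat) : form :=
  let xs := iota 0 k in
  let ys := iota k j in
  let zs := iota (k + j) l in
  let z := k + j + l in
  bigAll (xs ++ ys ++ zs)
    (FImp (bigAnd [:: bigAnd [seq L2 v | v <- xs ++ ys]; distinctF (xs ++ ys);
                      bigAnd [seq L1 v | v <- zs]; distinctF zs])
          (FEx z (bigAnd [:: L1 z;
                             bigAnd [seq FNot (FEq z w) | w <- zs];
                             bigAnd [seq FLt z x | x <- xs];
                             bigAnd [seq FNot (FLt z y) | y <- ys]]))).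

Definition ax_b (j k l : nat) : form :=
  let xs := iota 0 k in
  let ys := iota k j in
  let zs := iota (k + j) l in
  let z := k + j + l in
  bigAll (xs ++ ys ++ zs)
    (FImp (bigAnd [:: bigAnd [seq L2 v | v <- xs ++ ys]; distinctF (xs ++ ys);
                      bigAnd [seq L3 v | v <- zs]; distinctF zs])
          (FEx z (bigAnd [:: L3 z;
                             bigAnd [seq FNot (FEq z w) | w <- zs];
                             bigAnd [seq FLt x z | x <- xs];
                             bigAnd [seq FNot (FLt y z) | y <- ys]]))).

Definition ax_c (j j' k k' l : nat) : form :=
  let xs := iota 0 k in
  let ys := iota k j in
  let xs' := iota (k + j) k' in
  let ys' := iota (k + j + k') j' in
  let zs := iota (k + j + k' + j') l in
  let z := k + j + k' + j' + l in
  bigAll (xs ++ ys ++ xs' ++ ys' ++ zs)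
    (FImp (bigAnd [:: bigAnd [seq L1 v | v <- xs ++ ys]; distinctF (xs ++ ys);
                      bigAnd [seq L3 v | v <- xs' ++ ys']; distinctF (xs' ++ ys');
                      bigAnd [seq L2 v | v <- zs]; distinctF zs])
          (FEx z (bigAnd [:: L2 z;
                             bigAnd [seq FNot (FEq z w) | w <- zs];
                             bigAnd [seq FLt x z | x <- xs];
                             bigAnd [seq FNot (FLt y z) | y <- ys];
                             bigAnd [seq FLt z x | x <- xs'];
                             bigAnd [seq FNot (FLt z y) | y <- ys']]))).

Definition T_as_irr (p : form) : Prop :=
  p = ax_irrefl \/ p = ax_trans \/ p = ax_depth_ge3 \/ p = ax_depth_le3 \/
  (exists j k l, p = ax_a j k l) \/
  (exists j k l, p = ax_b j k l) \/
  (exists j j' k k' l, p = ax_c j j' k k' l).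

Definition is_model (T : form -> Prop) (M : Type) (R : M -> M -> Prop) : Prop :=
  inhabited M /\ forall p, T p -> forall v : nat -> M, sat R v p.

Definition finite_type (M : Type) : Prop :=
  exists (n : nat) (g : 'I_n -> M), forall x : M, exists i, g i = x.

Definition countably_infinite (M : Type) : Prop :=
  exists f : M -> nat, bijective f.

Definition isomorphic (M N : Type) (R : M -> M -> Prop) (S : N -> N -> Prop) : Prop :=
  exists f : M -> N, bijective f /\ forall x y, R x y <-> S (f x) (f y).

Definition aleph0_categorical (T : form -> Prop) : Prop :=
  forall (M N : Type) (R : M -> M -> Prop) (S : N -> N -> Prop),
    is_model T R -> is_model T S ->
    countably_infinite M -> countably_infinite N -> isomorphic R S.

Definition no_finite_models (T : form -> Prop) : Prop :=
  forall (M : Type) (R : M -> M -> Prop), is_model T R -> ~ finite_type M.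

Definition entails (T : form -> Prop) (p : form) : Prop :=
  forall (M : Type) (R : M -> M -> Prop), is_model T R ->
    forall v : nat -> M, sat R v p.

Definition complete (T : form -> Prop) : Prop :=
  (exists (M : Type) (R : M -> M -> Prop), is_model T R) /\
  forall p, sentence p -> entails T p \/ entails T (FNot p).

(* Main.v *)
Require Import Defs.
From mathcomp Require Import all_boot.
From mathcomp Require Import zify.
From Stdlib Require List Classical ClassicalEpsilon PropExtensionality Setoid.
Set Implicit Arguments. Unset Strict Implicit. Unset Printing Implicit Defensive.

Notation propext := PropExtensionality.propositional_extensionality.


Section Sem.
Variables (M : Type) (R : M -> M -> Prop).

Lemma sat_ext v v' p : (forall i, v i = v' i) -> (sat R v p <-> sat R v' p).
Proof.
elim: p v v' => [i j|i j||p IHp q IHq|i p IHp] v v' E /=.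
- by rewrite !E.
- by rewrite !E.
- by [].
- have := IHp v v' E; have := IHq v v' E; tauto.
- split=> H a.
  + apply/(IHp (upd v i a)); last exact: H.
    by move=> k; rewrite /upd; case: (k == i).
  + apply/(IHp _ (upd v' i a)); last exact: H.
    by move=> k; rewrite /upd; case: (k == i).
Qed.

Lemma sat_not w p : sat R w (FNot p) = ~ sat R w p.
Proof. by []. Qed.

Lemma sat_and w p q : sat R w (FAnd p q) = (sat R w p /\ sat R w q).
Proof.
apply: propext => /=; split.
- move=> H; split; apply: Classical_Prop.NNPP => H'; apply: H => // ? ?; exact: H'.
- by case=> H1 H2 H; apply: H.
Qed.

Lemma sat_ex w i p : sat R w (FEx i p) = exists a, sat R (upd w i a) p.
Proof.
apply: propext => /=; split.
- by move=> H; apply: Classical_Pred_Type.not_all_not_ex => H'; apply: H.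
- by case=> a Ha H; apply: (H a).
Qed.

Lemma sat_top w : sat R w FTop = True.
Proof. apply: propext; split=> // _ ? //. Qed.

Lemma sat_bigAnd_map (T : Type) (f : T -> form) w (xs : seq T) :
  sat R w (bigAnd [seq f x | x <- xs]) = (forall x, List.In x xs -> sat R w (f x)).
Proof.
apply: propext; elim: xs => [|x xs IH].
- split => [_ ? []|_ /= ?] //.
- rewrite -[bigAnd _]/(FAnd (f x) (bigAnd [seq f y | y <- xs])) sat_and; split.
  + by case=> H1 /IH H2 y [<-|/H2].
  + by move=> H; split; [apply: H; left | apply/IH => y Hy; apply: H; right].
Qed.

Lemma sat_bigAnd_cons w p ps : sat R w (bigAnd (p :: ps)) = (sat R w p /\ sat R w (bigAnd ps)).
Proof. exact: sat_and. Qed.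

Lemma sat_bigAnd_nil w : sat R w (bigAnd [::]) = True.
Proof. exact: sat_top. Qed.

Lemma sat_bigAll w xs p : sat R w (bigAll xs p) <->
  (forall w', (forall i, ~ List.In i xs -> w' i = w i) -> sat R w' p).
Proof.
elim: xs w => [|x xs IH] w /=.
- split; last by apply; by [].
  move=> H w' E; have E' : forall i, w' i = w i by move=> i; apply: E.
  by apply/(sat_ext _ E').
- split.
  + move=> H w' E; have := H (w' x); move/IH; apply => i Hi.
    rewrite /upd; case: eqP => [->//|/eqP ne]; apply: E; case=> // e.
    by rewrite e eqxx in ne.
  + move=> H a; apply/IH => w' E; apply: H => i Hi.
    have Hi' : ~ List.In i xs by move=> h; apply: Hi; right.
    rewrite (E i Hi') /upd; case: eqP => // e; case: Hi; left; by rewrite e.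
Qed.

Lemma upd_same (w : nat -> M) i (a : M) : upd w i a i = a.
Proof. by rewrite /upd eqxx. Qed.

Lemma upd_other (w : nat -> M) i (a : M) j : j != i -> upd w i a j = w j.
Proof. by rewrite /upd => /negbTE ->. Qed.

Definition lev1 a := forall b, ~ R b a.
Definition cov b a := R b a /\ ~ (exists c, R b c /\ R c a).
Definition lev2 a := exists b, lev1 b /\ cov b a.
Definition lev3 a := exists b, lev2 b /\ cov b a.

Lemma nSn (x : nat) : (x == x.+1) = false.
Proof. by rewrite ltn_eqF. Qed.
Lemma nSSn (x : nat) : (x == x.+2) = false.
Proof. by rewrite ltn_eqF // ltnW. Qed.
Lemma nSSSn (x : nat) : (x.+1 == x.+2) = false.
Proof. by rewrite ltn_eqF. Qed.

Lemma sat_L1 w x : sat R w (L1 x) = lev1 (w x).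
Proof.
apply: propext; rewrite /L1 /lev1 /=; split=> H b; have := H b;
  by rewrite /upd eqxx nSn.
Qed.

Lemma sat_covers w (y x z : nat) : x != z -> y != z ->
  sat R w (covers y x z) = cov (w y) (w x).
Proof.
move=> xz yz; rewrite /covers sat_and sat_not sat_ex.
apply: propext; split; case=> H1 H2; split => // [[c Hc]]; apply: H2; exists c.
- by rewrite sat_and /= !upd_same !upd_other.
- by move: Hc; rewrite sat_and /= !upd_same !upd_other.
Qed.

Lemma sat_L2 w x : sat R w (L2 x) = lev2 (w x).
Proof.
rewrite /L2 sat_ex; apply: propext; split; case=> b Hb; exists b.
- move: Hb; rewrite sat_and sat_L1 sat_covers ?nSSn ?nSSSn //.
  by rewrite upd_same upd_other // nSn.
- rewrite sat_and sat_L1 sat_covers ?nSSn ?nSSSn //.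
  by rewrite upd_same upd_other // nSn.
Qed.

Lemma sat_L3 w x : sat R w (L3 x) = lev3 (w x).
Proof.
rewrite /L3 sat_ex; apply: propext; split; case=> b Hb; exists b.
- move: Hb; rewrite sat_and sat_L2 sat_covers ?nSSn ?nSSSn //.
  by rewrite upd_same upd_other // nSn.
- rewrite sat_and sat_L2 sat_covers ?nSSn ?nSSSn //.
  by rewrite upd_same upd_other // nSn.
Qed.

Lemma sat_distinctF w xs : sat R w (distinctF xs) <-> List.NoDup (map w xs).
Proof.
elim: xs => [|x xs IH].
- split => [_|_ ?] //; exact: List.NoDup_nil.
- rewrite -[distinctF (x :: xs)]/(FAnd (bigAnd [seq FNot (FEq x y) | y <- xs]) (distinctF xs)).
  rewrite sat_and sat_bigAnd_map /=; split.
  + case=> H1 /IH H2; constructor => //.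
    move/List.in_map_iff=> [y [e Hy]]; exact: (H1 y Hy).
  + move=> H; inversion H; subst; split; last exact/IH.
    by move=> y Hy /= e; apply: H2; apply/List.in_map_iff; exists y.
Qed.

End Sem.


Lemma In_mem (T : eqType) (x : T) s : List.In x s <-> x \in s.
Proof.
elim: s => [|y s IH] //=; rewrite in_cons; split.
- by case=> [->|/IH ->]; rewrite ?eqxx ?orbT.
- by case/orP=> [/eqP ->|/IH]; [left|right].
Qed.

Lemma In_iota x s n : List.In x (iota s n) -> s <= x < s + n.
Proof. by move/In_mem; rewrite mem_iota. Qed.

Lemma In_mapP (A B : Type) (f : A -> B) (l : seq A) y :
  List.In y (map f l) <-> exists x, f x = y /\ List.In x l.
Proof.
elim: l => [|x l IH] /=; first by split => // [[? []]].
split.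
- case=> [<-|/IH [z [e h]]]; [by exists x; split => //; left | by exists z; split => //; right].
- case=> z [e [e'|h]]; first by left; rewrite e' e.
  by right; apply: (proj2 IH); exists z.
Qed.

Lemma cat_app (T : Type) (s1 s2 : seq T) : s1 ++ s2 = List.app s1 s2.
Proof. by elim: s1 => //= x s IH; rewrite IH. Qed.

Lemma ex_iff (A : Type) (P Q : A -> Prop) :
  (forall a, P a <-> Q a) -> (exists a, P a) = (exists a, Q a).
Proof. move=> H; apply: propext; split; case=> a /H ?; by exists a. Qed.

Section Sem2.
Variables (M : Type) (R : M -> M -> Prop).

Definition allIn (P : M -> Prop) (l : seq M) := forall x, List.In x l -> P x.

Lemma sat_imp w p q : sat R w (FImp p q) = (sat R w p -> sat R w q).
Proof. by []. Qed.

Lemma sat_distinctF' w xs : sat R w (distinctF xs) = List.NoDup (map w xs).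
Proof. by apply: propext; apply: sat_distinctF. Qed.

Lemma allIn_map P (f : nat -> M) l : allIn P (map f l) = forall x, List.In x l -> P (f x).
Proof.
apply: propext; split => H x Hx.
- by apply: H; apply/List.in_map_iff; exists x.
- by case/List.in_map_iff: Hx => y [<- Hy]; apply: H.
Qed.

Lemma notIn_map a (f : nat -> M) l : (~ List.In a (map f l)) = forall x, List.In x l -> a <> f x.
Proof.
apply: propext; split => H.
- by move=> x Hx e; apply: H; apply/List.in_map_iff; exists x.
- by case/List.in_map_iff=> y [e Hy]; apply: (H y Hy).
Qed.

Lemma sat_L1map w l : sat R w (bigAnd [seq L1 v | v <- l]) = allIn (lev1 R) (map w l).
Proof. rewrite sat_bigAnd_map allIn_map; apply: propext; split=> H x /H; by rewrite sat_L1. Qed.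
Lemma sat_L2map w l : sat R w (bigAnd [seq L2 v | v <- l]) = allIn (lev2 R) (map w l).
Proof. rewrite sat_bigAnd_map allIn_map; apply: propext; split=> H x /H; by rewrite sat_L2. Qed.
Lemma sat_L3map w l : sat R w (bigAnd [seq L3 v | v <- l]) = allIn (lev3 R) (map w l).
Proof. rewrite sat_bigAnd_map allIn_map; apply: propext; split=> H x /H; by rewrite sat_L3. Qed.

Lemma upd_lt (w : nat -> M) z a x : x < z -> upd w z a x = w x.
Proof. by move=> h; rewrite upd_other // ltn_eqF. Qed.

Section Conj.
Variables (w : nat -> M) (z : nat) (a : M) (l : seq nat).
Hypothesis Hl : forall v, List.In v l -> v < z.

Lemma c_neq : sat R (upd w z a) (bigAnd [seq FNot (FEq z v) | v <- l]) = ~ List.In a (map w l).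
Proof.
rewrite sat_bigAnd_map notIn_map; apply: propext; split=> H x Hx; have := H x Hx => /=;
  by rewrite upd_same upd_lt ?Hl.
Qed.
Lemma c_below : sat R (upd w z a) (bigAnd [seq FLt z v | v <- l]) = allIn (R a) (map w l).
Proof.
rewrite sat_bigAnd_map allIn_map; apply: propext; split=> H x Hx; have := H x Hx => /=;
  by rewrite upd_same upd_lt ?Hl.
Qed.
Lemma c_nbelow : sat R (upd w z a) (bigAnd [seq FNot (FLt z v) | v <- l]) = allIn (fun y => ~ R a y) (map w l).
Proof.
rewrite sat_bigAnd_map allIn_map; apply: propext; split=> H x Hx; have := H x Hx => /=;
  by rewrite upd_same upd_lt ?Hl.
Qed.
Lemma c_above : sat R (upd w z a) (bigAnd [seq FLt v z | v <- l]) = allIn (fun y => R y a) (map w l).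
Proof.
rewrite sat_bigAnd_map allIn_map; apply: propext; split=> H x Hx; have := H x Hx => /=;
  by rewrite upd_same upd_lt ?Hl.
Qed.
Lemma c_nabove : sat R (upd w z a) (bigAnd [seq FNot (FLt v z) | v <- l]) = allIn (fun y => ~ R y a) (map w l).
Proof.
rewrite sat_bigAnd_map allIn_map; apply: propext; split=> H x Hx; have := H x Hx => /=;
  by rewrite upd_same upd_lt ?Hl.
Qed.
End Conj.

Definition semA (XS YS ZS : seq M) :=
  allIn (lev2 R) (XS ++ YS) -> List.NoDup (XS ++ YS) -> allIn (lev1 R) ZS -> List.NoDup ZS ->
  exists z, lev1 R z /\ ~ List.In z ZS /\ allIn (R z) XS /\ allIn (fun y => ~ R z y) YS.

Definition semB (XS YS ZS : seq M) :=
  allIn (lev2 R) (XS ++ YS) -> List.NoDup (XS ++ YS) -> allIn (lev3 R) ZS -> List.NoDup ZS ->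
  exists z, lev3 R z /\ ~ List.In z ZS /\ allIn (fun x => R x z) XS /\ allIn (fun y => ~ R y z) YS.

Definition semC (XS YS XS' YS' ZS : seq M) :=
  allIn (lev1 R) (XS ++ YS) -> List.NoDup (XS ++ YS) ->
  allIn (lev3 R) (XS' ++ YS') -> List.NoDup (XS' ++ YS') ->
  allIn (lev2 R) ZS -> List.NoDup ZS ->
  exists z, lev2 R z /\ ~ List.In z ZS /\ allIn (fun x => R x z) XS /\ allIn (fun y => ~ R y z) YS
    /\ allIn (R z) XS' /\ allIn (fun y => ~ R z y) YS'.

Ltac ltz := move=> ? /In_iota /andP [] ? ?; lia.

Lemma sat_ax_a j k l : (forall w, sat R w (ax_a j k l)) <->
  (forall w, semA (map w (iota 0 k)) (map w (iota k j)) (map w (iota (k + j) l))).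
Proof.
rewrite /ax_a; cbv zeta.
match goal with |- (forall w, sat R w (bigAll _ ?B)) <-> _ =>
have Hbody : forall w, sat R w B
   <-> semA (map w (iota 0 k)) (map w (iota k j)) (map w (iota (k + j) l)) end.
  move=> w; rewrite sat_imp !sat_bigAnd_cons sat_bigAnd_nil sat_L2map sat_L1map !sat_distinctF' sat_ex.
  rewrite /semA map_cat.
  rewrite (@ex_iff _ _ (fun a => lev1 R a /\ ~ List.In a (map w (iota (k + j) l)) /\
       allIn (R a) (map w (iota 0 k)) /\ allIn (fun y => ~ R a y) (map w (iota k j)))).
    split=> H; [move=> *; apply: H; tauto | case=> ? [? [? [? _]]]; exact: H].
  move=> a; rewrite !sat_bigAnd_cons sat_bigAnd_nil sat_L1 upd_same c_neq; last by ltz.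
  rewrite c_below; last by ltz.
  rewrite c_nbelow; last by ltz.
  by split=> [[? [? [? [? _]]]] | [? [? [? ?]]]].
split=> H w.
- by apply/Hbody; have := H w; move/sat_bigAll; apply.
- by apply/sat_bigAll => w' _; apply/Hbody.
Qed.

Lemma sat_ax_b j k l : (forall w, sat R w (ax_b j k l)) <->
  (forall w, semB (map w (iota 0 k)) (map w (iota k j)) (map w (iota (k + j) l))).
Proof.
rewrite /ax_b; cbv zeta.
match goal with |- (forall w, sat R w (bigAll _ ?B)) <-> _ =>
have Hbody : forall w, sat R w B
   <-> semB (map w (iota 0 k)) (map w (iota k j)) (map w (iota (k + j) l)) end.
  move=> w; rewrite sat_imp !sat_bigAnd_cons sat_bigAnd_nil sat_L2map sat_L3map !sat_distinctF' sat_ex.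
  rewrite /semB map_cat.
  rewrite (@ex_iff _ _ (fun a => lev3 R a /\ ~ List.In a (map w (iota (k + j) l)) /\
       allIn (fun x => R x a) (map w (iota 0 k)) /\ allIn (fun y => ~ R y a) (map w (iota k j)))).
    split=> H; [move=> *; apply: H; tauto | case=> ? [? [? [? _]]]; exact: H].
  move=> a; rewrite !sat_bigAnd_cons sat_bigAnd_nil sat_L3 upd_same c_neq; last by ltz.
  rewrite c_above; last by ltz.
  rewrite c_nabove; last by ltz.
  by split=> [[? [? [? [? _]]]] | [? [? [? ?]]]].
split=> H w.
- by apply/Hbody; have := H w; move/sat_bigAll; apply.
- by apply/sat_bigAll => w' _; apply/Hbody.
Qed.

Lemma sat_ax_c j j' k k' l : (forall w, sat R w (ax_c j j' k k' l)) <->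
  (forall w, semC (map w (iota 0 k)) (map w (iota k j)) (map w (iota (k + j) k'))
                  (map w (iota (k + j + k') j')) (map w (iota (k + j + k' + j') l))).
Proof.
rewrite /ax_c; cbv zeta.
match goal with |- (forall w, sat R w (bigAll _ ?B)) <-> _ =>
have Hbody : forall w, sat R w B
   <-> semC (map w (iota 0 k)) (map w (iota k j)) (map w (iota (k + j) k'))
                  (map w (iota (k + j + k') j')) (map w (iota (k + j + k' + j') l)) end.
  move=> w; rewrite sat_imp !sat_bigAnd_cons sat_bigAnd_nil sat_L2map sat_L1map sat_L3map !sat_distinctF' sat_ex.
  rewrite /semC !map_cat.
  rewrite (@ex_iff _ _ (fun a => lev2 R a /\ ~ List.In a (map w (iota (k + j + k' + j') l)) /\
       allIn (fun x => R x a) (map w (iota 0 k)) /\ allIn (fun y => ~ R y a) (map w (iota k j))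
       /\ allIn (R a) (map w (iota (k + j) k')) /\ allIn (fun y => ~ R a y) (map w (iota (k + j + k') j')))).
    split=> H; [move=> *; apply: H; tauto | case=> ? [? [? [? [? [? _]]]]]; exact: H].
  move=> a; rewrite !sat_bigAnd_cons sat_bigAnd_nil sat_L2 upd_same c_neq; last by ltz.
  rewrite c_above; last by ltz.
  rewrite c_nabove; last by ltz.
  rewrite c_below; last by ltz.
  rewrite c_nbelow; last by ltz.
  by split=> [[? [? [? [? [? [? _]]]]]] | [? [? [? [? [? ?]]]]]].
split=> H w.
- by apply/Hbody; have := H w; move/sat_bigAll; apply.
- by apply/sat_bigAll => w' _; apply/Hbody.
Qed.

End Sem2.

Lemma map_nth_seg (T : Type) (d : T) A B C :
  map (nth d (A ++ B ++ C)) (iota (size A) (size B)) = B.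
Proof.
rewrite map_nth_iota; first by rewrite drop_size_cat // take_size_cat.
rewrite !size_cat; lia.
Qed.

Lemma map_nth_seg0 (T : Type) (d : T) B C :
  map (nth d (B ++ C)) (iota 0 (size B)) = B.
Proof. exact: (map_nth_seg d [::] B C). Qed.

Lemma In_cat (T : Type) (x : T) s1 s2 : List.In x (s1 ++ s2) <-> List.In x s1 \/ List.In x s2.
Proof. by rewrite cat_app; apply: List.in_app_iff. Qed.

Definition dec (T : Type) (x y : T) : {x = y} + {x <> y} :=
  ClassicalEpsilon.excluded_middle_informative (x = y).

Section Model.
Variables (M : Type) (R : M -> M -> Prop).
Hypothesis Hm : is_model T_as_irr R.

Lemma allIn_cat (P : M -> Prop) (s1 s2 : seq M) : allIn P (s1 ++ s2) <-> allIn P s1 /\ allIn P s2.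
Proof.
split.
- by move=> H; split=> x Hx; apply: H; apply/In_cat; [left|right].
- by case=> H1 H2 x /In_cat [/H1|/H2].
Qed.

Lemma allIn_nodup (P : M -> Prop) (s : seq M) : allIn P (List.nodup (@dec M) s) <-> allIn P s.
Proof.
split=> H x Hx; apply: H.
- exact: (proj2 (List.nodup_In _ _ _) Hx).
- exact: (proj1 (List.nodup_In _ _ _) Hx).
Qed.

Lemma NoDup_cat_nodup (s1 s2 : seq M) : (forall x, List.In x s1 -> ~ List.In x s2) ->
  List.NoDup (List.nodup (@dec M) s1 ++ List.nodup (@dec M) s2).
Proof.
move=> H; rewrite cat_app; apply: List.NoDup_app; try exact: List.NoDup_nodup.
by move=> a /List.nodup_In Ha /List.nodup_In; apply: H.
Qed.

Lemma irr a : ~ R a a.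
Proof.
case: Hm => _ H; have := H ax_irrefl (or_introl erefl) (fun _ => a) a.
by rewrite /= /upd /=.
Qed.

Lemma trans a b c : R a b -> R b c -> R a c.
Proof.
case: Hm => _ H; have := H ax_trans (or_intror (or_introl erefl)) (fun _ => a).
move=> /= /(_ a b c); rewrite /upd /= => h ab bc; apply: h => h'; exact: h' ab bc.
Qed.

Lemma no4 a b c d : R a b -> R b c -> R c d -> False.
Proof.
case: Hm => _ H; have := H ax_depth_le3 (or_intror (or_intror (or_intror (or_introl erefl)))) (fun _ => a).
rewrite /ax_depth_le3 sat_not => H' ab bc cd; apply: H'.
rewrite sat_ex; exists a; rewrite sat_ex; exists b; rewrite sat_ex; exists c; rewrite sat_ex; exists d.
by rewrite !sat_bigAnd_cons sat_bigAnd_nil /= /upd /=.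
Qed.

Lemma semA_all XS YS ZS : semA R XS YS ZS.
Proof.
case: Hm => [[d] H].
have := proj1 (sat_ax_a R (size YS) (size XS) (size ZS))
  (fun w => H _ (or_intror (or_intror (or_intror (or_intror (or_introl (ex_intro _ _ (ex_intro _ _ (ex_intro _ _ erefl)))))))) w)
  (nth d (XS ++ YS ++ ZS)).
rewrite map_nth_seg0 map_nth_seg.
have := map_nth_seg d (XS ++ YS) ZS [::]; rewrite cats0 -catA size_cat => ->.
by [].
Qed.

Lemma semB_all XS YS ZS : semB R XS YS ZS.
Proof.
case: Hm => [[d] H].
have := proj1 (sat_ax_b R (size YS) (size XS) (size ZS))
  (fun w => H _ (or_intror (or_intror (or_intror (or_intror (or_intror (or_introl (ex_intro _ _ (ex_intro _ _ (ex_intro _ _ erefl))))))))) w)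
  (nth d (XS ++ YS ++ ZS)).
rewrite map_nth_seg0 map_nth_seg.
have := map_nth_seg d (XS ++ YS) ZS [::]; rewrite cats0 -catA size_cat => ->.
by [].
Qed.

Lemma semC_all XS YS XS' YS' ZS : semC R XS YS XS' YS' ZS.
Proof.
case: Hm => [[d] H].
have := proj1 (sat_ax_c R (size YS) (size YS') (size XS) (size XS') (size ZS))
  (fun w => H _ (or_intror (or_intror (or_intror (or_intror (or_intror (or_intror
     (ex_intro _ _ (ex_intro _ _ (ex_intro _ _ (ex_intro _ _ (ex_intro _ _ erefl))))))))))) w)
  (nth d (XS ++ YS ++ XS' ++ YS' ++ ZS)).
rewrite map_nth_seg0 map_nth_seg.
have := map_nth_seg d (XS ++ YS) XS' (YS' ++ ZS); rewrite -catA size_cat => ->.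
have := map_nth_seg d (XS ++ YS ++ XS') YS' ZS; rewrite -!catA !size_cat addnA => ->.
have := map_nth_seg d (XS ++ YS ++ XS' ++ YS') ZS [::]; rewrite cats0 -!catA !size_cat !addnA => ->.
by [].
Qed.

Lemma extA XS YS ZS : allIn (lev2 R) (XS ++ YS) -> (forall x, List.In x XS -> ~ List.In x YS) ->
  allIn (lev1 R) ZS ->
  exists z, lev1 R z /\ ~ List.In z ZS /\ allIn (R z) XS /\ allIn (fun y => ~ R z y) YS.
Proof.
move=> /allIn_cat [H1 H2] Hd H3.
have [|||| z [Hz1 [Hz2 [Hz3 Hz4]]]] :=
  @semA_all (List.nodup (@dec M) XS) (List.nodup (@dec M) YS) (List.nodup (@dec M) ZS).
- by apply/allIn_cat; rewrite !allIn_nodup.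
- exact: NoDup_cat_nodup.
- by rewrite allIn_nodup.
- exact: List.NoDup_nodup.
exists z; split => //; split; first by move/List.nodup_In.
by split; [move/allIn_nodup: Hz3 | move/allIn_nodup: Hz4].
Qed.

Lemma extB XS YS ZS : allIn (lev2 R) (XS ++ YS) -> (forall x, List.In x XS -> ~ List.In x YS) ->
  allIn (lev3 R) ZS ->
  exists z, lev3 R z /\ ~ List.In z ZS /\ allIn (fun x => R x z) XS /\ allIn (fun y => ~ R y z) YS.
Proof.
move=> /allIn_cat [H1 H2] Hd H3.
have [|||| z [Hz1 [Hz2 [Hz3 Hz4]]]] :=
  @semB_all (List.nodup (@dec M) XS) (List.nodup (@dec M) YS) (List.nodup (@dec M) ZS).
- by apply/allIn_cat; rewrite !allIn_nodup.
- exact: NoDup_cat_nodup.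
- by rewrite allIn_nodup.
- exact: List.NoDup_nodup.
exists z; split => //; split; first by move/List.nodup_In.
by split; [move/allIn_nodup: Hz3 | move/allIn_nodup: Hz4].
Qed.

Lemma extC XS YS XS' YS' ZS : allIn (lev1 R) (XS ++ YS) -> (forall x, List.In x XS -> ~ List.In x YS) ->
  allIn (lev3 R) (XS' ++ YS') -> (forall x, List.In x XS' -> ~ List.In x YS') ->
  allIn (lev2 R) ZS ->
  exists z, lev2 R z /\ ~ List.In z ZS /\ allIn (fun x => R x z) XS /\ allIn (fun y => ~ R y z) YS
    /\ allIn (R z) XS' /\ allIn (fun y => ~ R z y) YS'.
Proof.
move=> /allIn_cat [H1 H2] Hd /allIn_cat [H1' H2'] Hd' H3.
have [|||||| z [Hz1 [Hz2 [Hz3 [Hz4 [Hz5 Hz6]]]]]] :=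
  @semC_all (List.nodup (@dec M) XS) (List.nodup (@dec M) YS)
    (List.nodup (@dec M) XS') (List.nodup (@dec M) YS') (List.nodup (@dec M) ZS).
- by apply/allIn_cat; rewrite !allIn_nodup.
- exact: NoDup_cat_nodup.
- by apply/allIn_cat; rewrite !allIn_nodup.
- exact: NoDup_cat_nodup.
- by rewrite allIn_nodup.
- exact: List.NoDup_nodup.
exists z; split => //; split; first by move/List.nodup_In.
split; first by move/allIn_nodup: Hz3.
split; first by move/allIn_nodup: Hz4.
by split; [move/allIn_nodup: Hz5 | move/allIn_nodup: Hz6].
Qed.

End Model.

Section Lev.
Variables (M : Type) (R : M -> M -> Prop).
Hypothesis Hm : is_model T_as_irr R.

Lemma below_min a : ~ lev1 R a -> exists m, lev1 R m /\ R m a.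
Proof.
move=> /Classical_Pred_Type.not_all_not_ex [b1 H1].
case: (Classical_Prop.classic (lev1 R b1)) => [h|/Classical_Pred_Type.not_all_not_ex [b2 H2]].
  by exists b1.
case: (Classical_Prop.classic (lev1 R b2)) => [h|/Classical_Pred_Type.not_all_not_ex [b3 H3]].
  by exists b2; split => //; exact: (trans Hm H2 H1).
by case: (no4 Hm H3 H2 H1).
Qed.

Lemma lev_cases a : lev1 R a \/ lev2 R a \/ lev3 R a.
Proof.
case: (Classical_Prop.classic (lev1 R a)) => [|/below_min [m [Hm1 Hma]]]; first by left.
right; case: (Classical_Prop.classic (exists c, R m c /\ R c a)) => [[c [Hmc Hca]]|H].
- right; exists c; split.
  + exists m; split => //; split => // [[d [Hmd Hdc]]]; exact: (no4 Hm Hmd Hdc Hca).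
  + split => // [[e [Hce Hea]]]; exact: (no4 Hm Hmc Hce Hea).
- by left; exists m; split => //; split.
Qed.

Lemma l12 a : lev1 R a -> lev2 R a -> False.
Proof. by move=> H [b [_ [Hb _]]]; apply: (H b). Qed.

Lemma l13 a : lev1 R a -> lev3 R a -> False.
Proof. by move=> H [b [_ [Hb _]]]; apply: (H b). Qed.

Lemma l23 a : lev2 R a -> lev3 R a -> False.
Proof.
move=> H2 [b [[m [_ [Hmb _]]] [Hba _]]].
have [||| z [_ [_ [Hz _]]]] := @extB _ _ Hm [:: a] [::] [::].
- by move=> x [<-|[]].
- by move=> x _ [].
- by move=> x [].
exact: (no4 Hm Hmb Hba (Hz a (or_introl erefl))).
Qed.

Lemma R3 x y : lev3 R x -> ~ R x y.
Proof. by move=> [b [[m [_ [Hmb _]]] [Hbx _]]] Hxy; exact: (no4 Hm Hmb Hbx Hxy). Qed.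

Lemma R2 x y : lev2 R x -> R x y -> lev3 R y.
Proof.
move=> Hx Hxy; exists x; split => //; split => // [[c [Hxc Hcy]]].
case: Hx => m [_ [Hmx _]]; exact: (no4 Hm Hmx Hxc Hcy).
Qed.

Lemma R13 x y : lev1 R x -> lev3 R y -> R x y.
Proof.
move=> Hx Hy.
have [||||| z [_ [_ [H1 [_ [H2 _]]]]]] := @extC _ _ Hm [:: x] [::] [:: y] [::] [::].
- by move=> ? [<-|[]].
- by move=> ? _ [].
- by move=> ? [<-|[]].
- by move=> ? _ [].
- by move=> ? [].
exact: (trans Hm (H1 x (or_introl erefl)) (H2 y (or_introl erefl))).
Qed.

Lemma lev1_list n : exists l : seq M, size l = n /\ List.NoDup l /\ allIn (lev1 R) l.
Proof.
elim: n => [|n [l [Hs [Hnd Hl]]]].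
  by exists [::]; split => //; split; [exact: List.NoDup_nil | move=> ? []].
have [||| z [Hz1 [Hz2 _]]] := @extA _ _ Hm [::] [::] l.
- by move=> ? [].
- by move=> ? [].
- exact: Hl.
exists (z :: l); split; first by rewrite /= Hs.
split; first by constructor.
by move=> x [<-|/Hl].
Qed.

End Lev.

Definition samelev (M N : Type) (R : M -> M -> Prop) (S : N -> N -> Prop) a b :=
  (lev1 R a <-> lev1 S b) /\ (lev2 R a <-> lev2 S b) /\ (lev3 R a <-> lev3 S b).

Definition piso (M N : Type) (R : M -> M -> Prop) (S : N -> N -> Prop) (P : seq (M * N)) :=
  (forall p q, List.In p P -> List.In q P -> (p.1 = q.1 <-> p.2 = q.2) /\ (R p.1 q.1 <-> S p.2 q.2))
  /\ (forall p, List.In p P -> samelev R S p.1 p.2).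

Definition pb (P : Prop) : bool := if ClassicalEpsilon.excluded_middle_informative P then true else false.
Lemma pbP (P : Prop) : pb P <-> P.
Proof. by rewrite /pb; case: ClassicalEpsilon.excluded_middle_informative. Qed.

Lemma In_filter (T : Type) (f : pred T) x l : List.In x (filter f l) <-> List.In x l /\ f x.
Proof.
elim: l => [|y l IH] /=; first by split => // [[]].
case E: (f y) => /=.
- split; first by case=> [<-|/IH [? ?]]; auto.
  by case=> [[<-|H] Hf]; [left|right; apply/IH].
- rewrite IH; split; first by case=> ? ?; auto.
  by case=> [[<-|?] Hf]; [rewrite E in Hf|].
Qed.

Definition img (M N : Type) (Q : M -> Prop) (P : seq (M * N)) : seq N :=
  map snd (filter (fun q => pb (Q q.1)) P).

Lemma In_img (M N : Type) (Q : M -> Prop) (P : seq (M * N)) y :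
  List.In y (img Q P) <-> exists x, List.In (x, y) P /\ Q x.
Proof.
rewrite /img; split.
- case/List.in_map_iff => [[x y'] [/= -> /In_filter [H /pbP Hq]]]; by exists x.
- case=> x [H Hq]; apply/List.in_map_iff; exists (x, y); split => //.
  by apply/In_filter; split => //; apply/pbP.
Qed.

Section Forth.
Variables (M N : Type) (R : M -> M -> Prop) (S : N -> N -> Prop).
Hypothesis HM : is_model T_as_irr R.
Hypothesis HN : is_model T_as_irr S.

Lemma piso_sub (P Q : seq (M * N)) : (forall p, List.In p Q -> List.In p P) -> piso R S P -> piso R S Q.
Proof. move=> H [H1 H2]; split => [p q /H ? /H ?|p /H]; auto. Qed.

Lemma samelev1 a b : lev1 R a -> lev1 S b -> samelev R S a b.
Proof.
move=> Ha Hb; split; first by split.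
split; split => H; exfalso; [exact: (l12 Ha H)|exact: (l12 Hb H)|exact: (l13 Ha H)|exact: (l13 Hb H)].
Qed.
Lemma samelev2 a b : lev2 R a -> lev2 S b -> samelev R S a b.
Proof.
move=> Ha Hb; split; [|split].
- split => H; exfalso; [exact: (l12 H Ha) | exact: (l12 H Hb)].
- by split.
- split => H; exfalso; [exact: (l23 HM Ha H)|exact: (l23 HN Hb H)].
Qed.
Lemma samelev3 a b : lev3 R a -> lev3 S b -> samelev R S a b.
Proof.
move=> Ha Hb; split; last split; try by split.
- split => H; exfalso; [exact: (l13 H Ha)|exact: (l13 H Hb)].
- split => H; exfalso; [exact: (l23 HM H Ha)|exact: (l23 HN H Hb)].
Qed.

Lemma piso_ext P a b : piso R S P -> samelev R S a b ->
  (forall x y, List.In (x, y) P -> (a = x <-> b = y) /\ (R a x <-> S b y) /\ (R x a <-> S y b)) ->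
  piso R S ((a, b) :: P).
Proof.
move=> [H1 H2] Hab H; split; last by move=> p [<-|/H2].
have Haa : R a a <-> S b b by split => h; exfalso; [exact: (irr HM h)|exact: (irr HN h)].
move=> [x1 y1] [x2 y2] /= [e1|h1] [e2|h2].
- by case: e1 => <- <-; case: e2 => <- <-.
- by case: e1 => <- <- /=; have := H _ _ h2; tauto.
- case: e2 => <- <- /=; have [[e1 e2] [_ r]] := H _ _ h1.
  by split; [split => e; [apply/esym/e1/esym | apply/esym/e2/esym] | exact: r].
- exact: (H1 _ _ h1 h2).
Qed.

Lemma via P (Q rel : M -> Prop) (relN : N -> Prop) :
  allIn relN (img (fun x => Q x /\ rel x) P) -> allIn (fun y => ~ relN y) (img (fun x => Q x /\ ~ rel x) P) ->
  forall x y, List.In (x, y) P -> Q x -> (rel x <-> relN y).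
Proof.
move=> H1 H2 x y Hxy Hq; case: (Classical_Prop.classic (rel x)) => Hr.
- by split => // _; apply: H1; apply/In_img; exists x.
- split => // h; exfalso; apply: (H2 y) => //; apply/In_img; exists x; split => //.
Qed.

Lemma disj P (Q rel : M -> Prop) : piso R S P ->
  forall y, List.In y (img (fun x => Q x /\ rel x) P) -> ~ List.In y (img (fun x => Q x /\ ~ rel x) P).
Proof.
move=> [H1 _] y /In_img [x1 [h1 [_ r1]]] /In_img [x2 [h2 [_ r2]]].
have [[_ e] _] := H1 _ _ h1 h2; move: e => /= e; apply: r2; by rewrite -(e erefl).
Qed.

Lemma levimg P (Q : M -> Prop) (Qn : N -> Prop) (L : M -> Prop) : piso R S P ->
  (forall x y, samelev R S x y -> L x -> Qn y) -> allIn Qn (img (fun x => L x /\ Q x) P).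
Proof. by move=> [_ H2] H y /In_img [x [h [hl _]]]; apply: (H x) => //; exact: (H2 _ h). Qed.

Lemma forth P a : piso R S P -> exists b, piso R S ((a, b) :: P).
Proof.
move=> HP; case: (Classical_Prop.classic (exists b, List.In (a, b) P)) => [[b Hb]|Hnd].
  by exists b; apply: (piso_sub _ HP) => p [<-|].
have Hx : forall x y, List.In (x, y) P -> a <> x by move=> x y h e; apply: Hnd; exists y; rewrite e.
have Hsl : forall x y, List.In (x, y) P -> samelev R S x y by move=> x y h; exact: (HP.2 _ h).
have Heq : forall (L : M -> Prop) (Ln : N -> Prop) b,
    (forall x y, samelev R S x y -> Ln y -> L x) -> Ln b -> ~ List.In b (img (fun x => L x /\ True) P) ->
    forall x y, List.In (x, y) P -> (a = x <-> b = y).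
  move=> L Ln b HL Hb Hn x y h; split => e; exfalso; first exact: (Hx _ _ h e).
  apply: Hn; apply/In_img; exists x; split; first by rewrite e.
  split => //; apply: (HL x y (Hsl _ _ h)); by rewrite -e.
case: (lev_cases HM a) => [Ha|[Ha|Ha]].
-
  have [||| b [Hb1 [Hb2 [Hb3 Hb4]]]] := @extA _ _ HN
      (img (fun x => lev2 R x /\ R a x) P) (img (fun x => lev2 R x /\ ~ R a x) P)
      (img (fun x => lev1 R x /\ True) P).
  + apply/allIn_cat; split; apply: (levimg HP) => x y [_ [h _]]; exact: (proj1 h).
  + exact: disj.
  + apply: (levimg HP) => x y [h _]; exact: (proj1 h).
  exists b; apply: piso_ext => //; first exact: samelev1.
  move=> x y h; split.
    by apply: (Heq (lev1 R) (lev1 S)) => // ? ? [hh _]; move/hh.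
  split; last by split => hh; exfalso; [exact: (Ha x)|exact: (Hb1 y)].
  have [hs1 [hs2 hs3]] := Hsl _ _ h.
  case: (lev_cases HM x) => [hx|[hx|hx]].
  + by split => hh; exfalso; [exact: (hx a)|exact: ((proj1 hs1 hx) b)].
  + exact: (via Hb3 Hb4 h hx).
  + split => _; [apply: (R13 HN Hb1); exact/hs3 | exact: (R13 HM Ha hx)].
-
  have [||||| b [Hb1 [Hb2 [Hb3 [Hb4 [Hb5 Hb6]]]]]] := @extC _ _ HN
      (img (fun x => lev1 R x /\ R x a) P) (img (fun x => lev1 R x /\ ~ R x a) P)
      (img (fun x => lev3 R x /\ R a x) P) (img (fun x => lev3 R x /\ ~ R a x) P)
      (img (fun x => lev2 R x /\ True) P).
  + apply/allIn_cat; split; apply: (levimg HP) => x y [h _]; exact: (proj1 h).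
  + exact: disj.
  + apply/allIn_cat; split; apply: (levimg HP) => x y [_ [_ h]]; exact: (proj1 h).
  + exact: disj.
  + apply: (levimg HP) => x y [_ [h _]]; exact: (proj1 h).
  exists b; apply: piso_ext => //; first exact: samelev2.
  move=> x y h; split.
    by apply: (Heq (lev2 R) (lev2 S)) => // ? ? [_ [hh _]]; move/hh.
  have [hs1 [hs2 hs3]] := Hsl _ _ h.
  case: (lev_cases HM x) => [hx|[hx|hx]].
  + split; first by split => hh; exfalso; [exact: (hx a)|exact: ((proj1 hs1 hx) b)].
    exact: (via Hb3 Hb4 h hx).
  + have hy := proj1 hs2 hx.
    split; split => hh; exfalso.
    * exact: (l23 HM hx (R2 HM Ha hh)).
    * exact: (l23 HN hy (R2 HN Hb1 hh)).
    * exact: (l23 HM Ha (R2 HM hx hh)).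
    * exact: (l23 HN Hb1 (R2 HN hy hh)).
  + split; first exact: (via Hb5 Hb6 h hx).
    by split => hh; exfalso; [exact: (R3 HM hx hh)|exact: (R3 HN (proj1 hs3 hx) hh)].
-
  have [||| b [Hb1 [Hb2 [Hb3 Hb4]]]] := @extB _ _ HN
      (img (fun x => lev2 R x /\ R x a) P) (img (fun x => lev2 R x /\ ~ R x a) P)
      (img (fun x => lev3 R x /\ True) P).
  + apply/allIn_cat; split; apply: (levimg HP) => x y [_ [h _]]; exact: (proj1 h).
  + exact: disj.
  + apply: (levimg HP) => x y [_ [_ h]]; exact: (proj1 h).
  exists b; apply: piso_ext => //; first exact: samelev3.
  move=> x y h; split.
    by apply: (Heq (lev3 R) (lev3 S)) => // ? ? [_ [_ hh]]; move/hh.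
  split; first by split => hh; exfalso; [exact: (R3 HM Ha hh)|exact: (R3 HN Hb1 hh)].
  have [hs1 [hs2 hs3]] := Hsl _ _ h.
  case: (lev_cases HM x) => [hx|[hx|hx]].
  + split => _; [apply: (R13 HN _ Hb1); exact/hs1 | exact: (R13 HM hx Ha)].
  + exact: (via Hb3 Hb4 h hx).
  + by split => hh; exfalso; [exact: (R3 HM hx hh)|exact: (R3 HN (proj1 hs3 hx) hh)].
Qed.

End Forth.

Definition swp (M N : Type) (p : M * N) : N * M := (p.2, p.1).

Lemma swp_swp (M N : Type) (P : seq (M * N)) : map (@swp _ _) (map (@swp _ _) P) = P.
Proof. by elim: P => //= [[x y] P ->]. Qed.

Lemma piso_swap (M N : Type) (R : M -> M -> Prop) (S : N -> N -> Prop) P :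
  piso R S P -> piso S R (map (@swp _ _) P).
Proof.
move=> [H1 H2]; split.
- move=> p q /In_mapP [p0 [<- h1]] /In_mapP [q0 [<- h2]] /=.
  have := H1 _ _ h1 h2; tauto.
- move=> p /In_mapP [p0 [<- h]] /=; rewrite /samelev; have := H2 _ h; rewrite /samelev; tauto.
Qed.

Section EF.
Variables (M N : Type) (R : M -> M -> Prop) (S : N -> N -> Prop).
Hypothesis HM : is_model T_as_irr R.
Hypothesis HN : is_model T_as_irr S.

Lemma back P b : piso R S P -> exists a, piso R S ((a, b) :: P).
Proof.
move=> HP; have [a Ha] := forth HN HM b (piso_swap HP).
by exists a; have := piso_swap Ha; rewrite /= swp_swp.
Qed.

Lemma EF p : forall (v : nat -> M) (w : nat -> N) (Sv : seq nat),
  (forall i, i \in fv p -> i \in Sv) -> piso R S (map (fun i => (v i, w i)) Sv) ->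
  (sat R v p <-> sat S w p).
Proof.
elim: p => [i j|i j||p IHp q IHq|i p IHp] v w Sv Hsub HP /=.
- have hi : List.In (v i, w i) (map (fun i => (v i, w i)) Sv).
    by apply/In_mapP; exists i; split => //; apply/In_mem; apply: Hsub; rewrite inE eqxx.
  have hj : List.In (v j, w j) (map (fun i => (v i, w i)) Sv).
    by apply/In_mapP; exists j; split => //; apply/In_mem; apply: Hsub; rewrite !inE eqxx orbT.
  exact: (proj2 (HP.1 _ _ hi hj)).
- have hi : List.In (v i, w i) (map (fun i => (v i, w i)) Sv).
    by apply/In_mapP; exists i; split => //; apply/In_mem; apply: Hsub; rewrite inE eqxx.
  have hj : List.In (v j, w j) (map (fun i => (v i, w i)) Sv).
    by apply/In_mapP; exists j; split => //; apply/In_mem; apply: Hsub; rewrite !inE eqxx orbT.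
  exact: (proj1 (HP.1 _ _ hi hj)).
- by [].
- have := IHp v w Sv (fun k h => Hsub k ltac:(by rewrite mem_cat h)) HP.
  have := IHq v w Sv (fun k h => Hsub k ltac:(by rewrite mem_cat h orbT)) HP.
  tauto.
- have Hsub' : forall k, k \in fv p -> k \in i :: Sv.
    move=> k hk; rewrite inE; case: (eqVneq k i) => //= ne; apply: Hsub.
    by rewrite mem_filter ne hk.
  have key : forall a b, piso R S ((a, b) :: map (fun i => (v i, w i)) Sv) ->
      (sat R (upd v i a) p <-> sat S (upd w i b) p).
    move=> a b H; apply: (IHp (upd v i a) (upd w i b) (i :: Sv) Hsub'); apply: (piso_sub _ H).
    move=> q hq; have [k [eq hk]] := proj1 (In_mapP _ _ _) hq; subst q.
    rewrite /upd; case: eqP => [_|ne]; [by left|right].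
    apply/In_mapP; exists k; split => //; case: hk => // e; by case: ne.
  split => H x.
  + have [a Ha] := back x HP; apply/(key a x Ha); exact: H.
  + have [b Hb] := forth HM HN x HP; apply/(key x b Hb); exact: H.
Qed.

End EF.

Lemma piso_nil (M N : Type) (R : M -> M -> Prop) (S : N -> N -> Prop) : piso R S [::].
Proof. by split => [? ? []|? []]. Qed.

Lemma completeness_part (p : form) : sentence p -> entails T_as_irr p \/ entails T_as_irr (FNot p).
Proof.
move=> Hs; apply: Classical_Prop.NNPP => Hn.
apply: (Hn); left => M R HM v; apply: Classical_Prop.NNPP => Hv.
apply: (Hn); right => N S HN w; rewrite sat_not => Hw; apply: Hv.
have H := @EF _ _ R S HM HN p v w [::] (fun i => ltac:(by rewrite Hs)) (piso_nil R S).
by apply/H.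
Qed.

Lemma size_length (T : Type) (s : seq T) : size s = List.length s.
Proof. by elim: s => //= x s ->. Qed.

Lemma no_finite : no_finite_models T_as_irr.
Proof.
move=> M R HM [n [g Hg]].
have [l [Hs [Hnd _]]] := lev1_list HM n.+1.
have H : List.incl l (map g (enum 'I_n)).
  move=> x _; have [i <-] := Hg x; apply/In_mapP; exists i; split => //.
  by apply/In_mem; rewrite mem_enum.
have := List.NoDup_incl_length Hnd H; rewrite -!size_length size_map size_enum_ord Hs.
by move/leP; rewrite ltnn.
Qed.

Section Cat.
Variables (M N : Type) (R : M -> M -> Prop) (S : N -> N -> Prop).
Hypothesis HM : is_model T_as_irr R.
Hypothesis HN : is_model T_as_irr S.
Variables (fM : M -> nat) (gM : nat -> M) (fN : N -> nat) (gN : nat -> N).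
Hypotheses (fMK : cancel fM gM) (gMK : cancel gM fM) (fNK : cancel fN gN) (gNK : cancel gN fN).

Definition fw (P : seq (M * N)) (a : M) : N :=
  ClassicalEpsilon.epsilon (inhabits (gN 0)) (fun b => piso R S ((a, b) :: P)).
Definition bw (P : seq (M * N)) (b : N) : M :=
  ClassicalEpsilon.epsilon (inhabits (gM 0)) (fun a => piso R S ((a, b) :: P)).

Fixpoint stage n : seq (M * N) :=
  match n with
  | 0 => [::]
  | n'.+1 => let P := stage n' in let Q := (gM n', fw P (gM n')) :: P in (bw Q (gN n'), gN n') :: Q
  end.

Lemma stage_piso n : piso R S (stage n).
Proof.
elim: n => [|n IH] /=; first exact: piso_nil.
have H1 : piso R S ((gM n, fw (stage n) (gM n)) :: stage n).
  apply: (ClassicalEpsilon.epsilon_spec (inhabits (gN 0)) (fun b => piso R S ((gM n, b) :: stage n))).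
  have h := forth HM HN (gM n) IH. exact: h.
set Q := (_ :: stage n) in H1 *.
apply: (ClassicalEpsilon.epsilon_spec (inhabits (gM 0)) (fun a => piso R S ((a, gN n) :: Q))).
have h := back HM HN (gN n) H1. exact: h.
Qed.

Lemma stage_mono n m : n <= m -> forall p, List.In p (stage n) -> List.In p (stage m).
Proof.
elim: m => [|m IH]; first by rewrite leqn0 => /eqP ->.
rewrite leq_eqVlt => /orP [/eqP -> //|/IH H] p /H h /=; by right; right.
Qed.

Definition F (x : M) : N := fw (stage (fM x)) x.

Lemma F_in x : List.In (x, F x) (stage (fM x).+1).
Proof. by rewrite /= fMK; right; left. Qed.

Lemma common x y : piso R S [:: (x, F x); (y, F y)].
Proof.
apply: (piso_sub _ (stage_piso (maxn (fM x) (fM y)).+1)) => q [<-|[<-|[]]].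
- by apply: (stage_mono _ (F_in x)); rewrite ltnS leq_maxl.
- by apply: (stage_mono _ (F_in y)); rewrite ltnS leq_maxr.
Qed.

Lemma F_inj x y : F x = F y -> x = y.
Proof.
move=> e; have [H1 _] := common x y.
by apply/(proj1 (H1 _ _ (or_introl erefl) (or_intror (or_introl erefl)))).
Qed.

Lemma F_hom x y : R x y <-> S (F x) (F y).
Proof.
have [H1 _] := common x y.
exact: (proj2 (H1 _ _ (or_introl erefl) (or_intror (or_introl erefl)))).
Qed.

Lemma F_surj b : exists a, F a = b.
Proof.
pose n := fN b.
have hb : List.In (bw ((gM n, fw (stage n) (gM n)) :: stage n) (gN n), b) (stage n.+1).
  by rewrite /= fNK; left.
set a := bw _ _ in hb; exists a.
have [H1 _] := stage_piso (maxn n.+1 (fM a).+1).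
have h1 := stage_mono (leq_maxl n.+1 (fM a).+1) hb.
have h2 := stage_mono (leq_maxr n.+1 (fM a).+1) (F_in a).
by have [[e _] _] := H1 _ _ h2 h1; apply: e.
Qed.

Lemma iso : isomorphic R S.
Proof.
exists F; split; last exact: F_hom.
pose G b := ClassicalEpsilon.epsilon (inhabits (gM 0)) (fun a => F a = b).
have GK : cancel G F by move=> b; exact: (ClassicalEpsilon.epsilon_spec (inhabits (gM 0)) (fun a => F a = b) (F_surj b)).
exists G => // x; apply: F_inj; exact: GK.
Qed.

End Cat.

Lemma categorical : aleph0_categorical T_as_irr.
Proof.
move=> M N R S HM HN [fM [gM fMK gMK]] [fN [gN fNK gNK]].
have h := iso HM HN fMK fNK. exact: h.
Qed.

Definition E := ('I_3 * nat * seq nat)%type.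
Definition lvl (x : E) : nat := nat_of_ord x.1.1.
Definition rk (x : E) : nat := x.1.2.
Definition dat (x : E) : seq nat := x.2.
Definition code (x : E) : nat := pickle x.

Lemma code_inj : injective code.
Proof. exact: (pcan_inj pickleK). Qed.

Definition Rb (x y : E) : bool :=
  match lvl x, lvl y with
  | 0, 1 => if rk x < rk y then code x \in dat y else code y \in dat x
  | 1, 2 => if rk y < rk x then code y \in dat x else code x \in dat y
  | 0, 2 => true
  | _, _ => false
  end.

Definition RE (x y : E) : Prop := Rb x y.

Definition o0 : 'I_3 := @Ordinal 3 0 isT.
Definition o1 : 'I_3 := @Ordinal 3 1 isT.
Definition o2 : 'I_3 := @Ordinal 3 2 isT.
Definition mk (l : 'I_3) (r : nat) (d : seq nat) : E := (l, r, d).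

Lemma lvl3 x : lvl x < 3.
Proof. exact: ltn_ord. Qed.

Lemma Rb_lvl x y : RE x y -> lvl x < lvl y.
Proof.
rewrite /RE /Rb; have := lvl3 x; have := lvl3 y.
by case: (lvl x) => [|[|[|?]]]; case: (lvl y) => [|[|[|?]]].
Qed.

Lemma Rb02 x y : lvl x = 0 -> lvl y = 2 -> RE x y.
Proof. by rewrite /RE /Rb => -> ->. Qed.

Lemma Rb01 x y : lvl x = 0 -> lvl y = 1 -> RE x y = (if rk x < rk y then code x \in dat y else code y \in dat x).
Proof. by rewrite /RE /Rb => -> ->. Qed.

Lemma Rb12 x y : lvl x = 1 -> lvl y = 2 -> RE x y = (if rk y < rk x then code y \in dat x else code x \in dat y).
Proof. by rewrite /RE /Rb => -> ->. Qed.

Lemma RE_irr x : ~ RE x x.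
Proof. by move/Rb_lvl; rewrite ltnn. Qed.

Lemma RE_trans x y z : RE x y -> RE y z -> RE x z.
Proof.
move=> /Rb_lvl h1 /Rb_lvl h2; have h3 := lvl3 z; apply: Rb02; lia.
Qed.

Lemma RE_no4 a b c d : RE a b -> RE b c -> RE c d -> False.
Proof. move=> /Rb_lvl ? /Rb_lvl ? /Rb_lvl ?; have := lvl3 d; lia. Qed.

Lemma lev1E x : lev1 RE x <-> lvl x = 0.
Proof.
split.
- move=> H; have := lvl3 x; case E: (lvl x) => [//|[|[|]]] // _.
  + case: (H (mk o0 (rk x).+1 [:: code x])); rewrite Rb01 //.
    by rewrite /= ltnNge leqnSn /= mem_head.
  + by case: (H (mk o0 0 [::])); apply: Rb02.
- by move=> h b /Rb_lvl; rewrite h.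
Qed.

Lemma lev2E x : lev2 RE x <-> lvl x = 1.
Proof.
split.
- move=> [b [/lev1E hb [Hbx Hn]]]; have := Rb_lvl Hbx; have := lvl3 x; rewrite hb.
  case E: (lvl x) => [|[|[|]]] // _ _.
  case: Hn; exists (mk o1 (maxn (rk b) (rk x)).+1 [:: code b; code x]); split.
  + by rewrite Rb01 //= ltnS leq_maxl mem_head.
  + by rewrite Rb12 //= ltnS leq_maxr !inE eqxx orbT.
- move=> h; exists (mk o0 (rk x).+1 [:: code x]); split; first exact/lev1E.
  split; first by rewrite Rb01 //= ltnNge leqnSn /= mem_head.
  by case=> c [/Rb_lvl h1 /Rb_lvl h2]; move: h1 h2; rewrite h /lvl /=; lia.
Qed.

Lemma lev3E x : lev3 RE x <-> lvl x = 2.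
Proof.
split.
- move=> [b [/lev2E hb [Hbx _]]]; have := Rb_lvl Hbx; have := lvl3 x; rewrite hb; lia.
- move=> h; exists (mk o1 (rk x).+1 [:: code x]); split; first exact/lev2E.
  split; first by rewrite Rb12 //= ltnSn mem_head.
  by case=> c [/Rb_lvl h1 /Rb_lvl h2]; move: h1 h2; rewrite h /lvl /=; lia.
Qed.

Lemma rk_bound x (L : seq E) : List.In x L -> rk x <= sumn (map rk L).
Proof.
elim: L => [[]|y L IH] /= [<-|/IH h]; first exact: leq_addr.
exact: (leq_trans h (leq_addl _ _)).
Qed.

Lemma NoDup_disj (A B : seq E) y : List.NoDup (A ++ B) -> List.In y A -> List.In y B -> False.
Proof.
elim: A => [|a A IH] /= H; first by [].
inversion H; subst => -[e|h] hB; last exact: IH.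
apply: H2; apply/In_cat; right; by rewrite e.
Qed.

Lemma code_in y (L : seq E) : (code y \in map code L) -> List.In y L.
Proof. by rewrite (mem_map code_inj) => /In_mem. Qed.

Lemma in_code y (L : seq E) : List.In y L -> (code y \in map code L).
Proof. by rewrite (mem_map code_inj) => /In_mem. Qed.

Lemma semA_E XS YS ZS : semA RE XS YS ZS.
Proof.
move=> H2 Hnd H1 _.
set N := (sumn (map rk (XS ++ YS ++ ZS))).+1.
have HN : forall x, List.In x (XS ++ YS ++ ZS) -> rk x < N by move=> x /rk_bound.
exists (mk o0 N (map code XS)); split; first exact/lev1E.
split.
  move=> h; have := HN _ (proj2 (In_cat _ _ _) (or_intror (proj2 (In_cat _ _ _) (or_intror h)))).
  by rewrite /= ltnn.
have lx : forall x, List.In x (XS ++ YS) -> lvl x = 1 /\ rk x < N.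
  move=> x hx; split; first exact/lev2E/H2.
  by apply: HN; rewrite catA; apply/In_cat; left.
split.
- move=> x hx; have [l r] := lx x (proj2 (In_cat _ _ _) (or_introl hx)).
  by rewrite Rb01 //= ltnNge (ltnW r) /=; apply: in_code.
- move=> y hy; have [l r] := lx y (proj2 (In_cat _ _ _) (or_intror hy)).
  rewrite Rb01 //= ltnNge (ltnW r) /= => /code_in h; exact: (NoDup_disj Hnd h hy).
Qed.

Lemma semB_E XS YS ZS : semB RE XS YS ZS.
Proof.
move=> H2 Hnd H1 _.
set N := (sumn (map rk (XS ++ YS ++ ZS))).+1.
have HN : forall x, List.In x (XS ++ YS ++ ZS) -> rk x < N by move=> x /rk_bound.
exists (mk o2 N (map code XS)); split; first exact/lev3E.
split.
  move=> h; have := HN _ (proj2 (In_cat _ _ _) (or_intror (proj2 (In_cat _ _ _) (or_intror h)))).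
  by rewrite /= ltnn.
have lx : forall x, List.In x (XS ++ YS) -> lvl x = 1 /\ rk x < N.
  move=> x hx; split; first exact/lev2E/H2.
  by apply: HN; rewrite catA; apply/In_cat; left.
split.
- move=> x hx; have [l r] := lx x (proj2 (In_cat _ _ _) (or_introl hx)).
  by rewrite Rb12 //= ltnNge (ltnW r) /=; apply: in_code.
- move=> y hy; have [l r] := lx y (proj2 (In_cat _ _ _) (or_intror hy)).
  rewrite Rb12 //= ltnNge (ltnW r) /= => /code_in h; exact: (NoDup_disj Hnd h hy).
Qed.

Lemma semC_E XS YS XS' YS' ZS : semC RE XS YS XS' YS' ZS.
Proof.
move=> H1 Hnd H3 Hnd' H2 _.
set L := XS ++ YS ++ XS' ++ YS' ++ ZS.
set N := (sumn (map rk L)).+1.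
have HN : forall x, List.In x L -> rk x < N by move=> x /rk_bound.
have lx1 : forall x, List.In x (XS ++ YS) -> lvl x = 0 /\ rk x < N.
  move=> x hx; split; first exact/lev1E/H1.
  by apply: HN; rewrite /L catA; apply/In_cat; left.
have lx3 : forall x, List.In x (XS' ++ YS') -> lvl x = 2 /\ rk x < N.
  move=> x hx; split; first exact/lev3E/H3.
  by apply: HN; rewrite /L catA; apply/In_cat; right; rewrite catA; apply/In_cat; left.
exists (mk o1 N (map code (XS ++ XS'))); split; first exact/lev2E.
split.
  move=> h; have : List.In (mk o1 N (map code (XS ++ XS'))) L.
    by rewrite /L !catA; apply/In_cat; right.
  by move/HN; rewrite /= ltnn.
split.
  move=> x hx; have [l r] := lx1 x (proj2 (In_cat _ _ _) (or_introl hx)).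
  by rewrite Rb01 //= r; apply: in_code; apply/In_cat; left.
split.
  move=> y hy; have [l r] := lx1 y (proj2 (In_cat _ _ _) (or_intror hy)).
  rewrite Rb01 //= r => /code_in /In_cat [h|h].
  - exact: (NoDup_disj Hnd h hy).
  - by have [l' _] := lx3 y (proj2 (In_cat _ _ _) (or_introl h)); rewrite l in l'.
split.
  move=> x hx; have [l r] := lx3 x (proj2 (In_cat _ _ _) (or_introl hx)).
  by rewrite Rb12 //= r; apply: in_code; apply/In_cat; right.
move=> y hy; have [l r] := lx3 y (proj2 (In_cat _ _ _) (or_intror hy)).
rewrite Rb12 //= r => /code_in /In_cat [h|h].
- by have [l' _] := lx1 y (proj2 (In_cat _ _ _) (or_introl h)); rewrite l in l'.
- exact: (NoDup_disj Hnd' h hy).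
Qed.

Lemma model_E : is_model T_as_irr RE.
Proof.
split; first exact: (inhabits (mk o0 0 [::])).
move=> p [->|[->|[->|[->|[[j [k [l ->]]]|[[j [k [l ->]]]|[j [j' [k [k' [l ->]]]]]]]]]]] v.
- move=> a /=; exact: RE_irr.
- move=> a b c /=; rewrite /upd /= => H; apply: Classical_Prop.NNPP => hn.
  apply: H => h1 h2; exact: hn (RE_trans h1 h2).
- rewrite /ax_depth_ge3 sat_ex; exists (mk o0 1 [:: code (mk o1 0 [::])]).
  rewrite sat_ex; exists (mk o1 0 [::]); rewrite sat_ex; exists (mk o2 1 [:: code (mk o1 0 [::])]).
  rewrite sat_and /= /upd /=; split.
  + by rewrite Rb01 //= mem_head.
  + by rewrite Rb12 //= mem_head.
- rewrite /ax_depth_le3 sat_not sat_ex => -[a]; rewrite sat_ex => -[b]; rewrite sat_ex => -[c].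
  rewrite sat_ex => -[d]; rewrite !sat_bigAnd_cons /= /upd /= => -[h1 [h2 [h3 _]]].
  exact: (RE_no4 h1 h2 h3).
- by move: v; apply/sat_ax_a => w; apply: semA_E.
- by move: v; apply/sat_ax_b => w; apply: semB_E.
- by move: v; apply/sat_ax_c => w; apply: semC_E.
Qed.


Theorem mainTheorem3 :
  aleph0_categorical T_as_irr /\ no_finite_models T_as_irr /\ complete T_as_irr.
Proof.
split; first exact: categorical.
split; first exact: no_finite.
split; first by exists E, RE; exact: model_E.
exact: completeness_part.
Qed.
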